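(* Let $F=f+\mu c$ with $\mu>0$, $f:\mathbb{R}^n\to\mathbb{R}$ convex and continuously differentiable with $L$-Lipschitz gradient, and $c:\mathbb{R}^n\to\mathbb{R}$ convex. Let $0<\tau_{\min}\le\tau_k\le\tau_{\max}<\infty$, let $d_k=\mathscr{P}_c(x_k-\tau_k\nabla f(x_k),\mu\tau_k)-x_k\neq0$, and let $\alpha_k\in(0,1]$ satisfy, with some $\theta>0$, both $\nu(\alpha_k)|1-\lambda(\alpha_k)|\ge\theta$ and $F_{k+1}-R_k\ge-\frac{\alpha_k^2}{2}L\|d_k\|^2+\alpha_k\Delta_k$, where $x_{k+1}=x_k+\alpha_kd_k$. Then $$\frac{F_k-F_{k+1}}{\|d_k\|^2}\ \ge\ \frac{\theta}{2L\tau_{\max}^2}>0 .$$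
   Context: Notation: $h_k=h(x_k)$, $\nabla h_k=\nabla h(x_k)$; $\mathscr{P}_c(x,\vartheta)=\operatorname{argmin}_y\{\vartheta c(y)+\frac12\|x-y\|^2\}$. $\Delta_k=d_k^T\nabla f_k+\mu(c(x_k+d_k)-c_k)$. Reference value: for an integer $N>0$, $m(0)=0$, $0\le m(k)\le\min\{m(k-1)+1,N-1\}$, $F_{l(k)}=\max_{0\le j\le m(k)}F_{k-j}$, and $R_k=\eta_kF_{l(k)}+(1-\eta_k)F_k$ with $\eta_k\in[0,1]$. Quotients: $\nu(\alpha_k)=\frac{F_{k+1}-F_k}{\alpha_k\Delta_k}$, $\lambda(\alpha_k)=\frac{F_{k+1}-R_k}{\alpha_k\Delta_k}$. *)

(* Defs.v *)
From HB Require Import structures.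
From mathcomp Require Import all_boot all_order all_algebra.
From mathcomp Require Import all_classical all_reals all_analysis.
Set Implicit Arguments. Unset Strict Implicit. Unset Printing Implicit Defensive.
Import Order.TTheory GRing.Theory Num.Theory.
Import numFieldNormedType.Exports.
Local Open Scope ring_scope.

Definition dotv (R : realType) (n : nat) (u v : 'rV[R]_n) : R :=
  \sum_(i < n) u 0 i * v 0 i.
Definition enorm (R : realType) (n : nat) (u : 'rV[R]_n) : R :=
  Num.sqrt (dotv u u).

Definition convex_fun (R : realType) (n : nat) (g : 'rV[R]_n -> R) : Prop :=
  forall (x y : 'rV[R]_n) (t : R), 0 <= t -> t <= 1 ->
    g (t *: x + (1 - t) *: y) <= t * g x + (1 - t) * g y.

Definition is_gradient (R : realType) (n : nat)
    (f : 'rV[R]_n -> R) (gradf : 'rV[R]_n -> 'rV[R]_n) : Prop :=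
  forall x : 'rV[R]_n, differentiable f x /\ forall h, 'd f x h = dotv (gradf x) h.

Definition lipschitz_with (R : realType) (n : nat)
    (g : 'rV[R]_n -> 'rV[R]_n) (L : R) : Prop :=
  forall x y : 'rV[R]_n, enorm (g x - g y) <= L * enorm (x - y).

(* p is (the) minimizer of  y |-> th * c y + 1/2 ||x - y||^2,
   i.e. p = P_c(x, th)  (the argmin is unique for convex c, th > 0). *)
Definition is_prox (R : realType) (n : nat) (c : 'rV[R]_n -> R)
    (x : 'rV[R]_n) (th : R) (p : 'rV[R]_n) : Prop :=
  forall y : 'rV[R]_n,
    th * c p + 2^-1 * (enorm (x - p)) ^+ 2 <= th * c y + 2^-1 * (enorm (x - y)) ^+ 2.

Definition Fmaxref (R : realType) (Fs : nat -> R) (m : nat -> nat) (k : nat) : R :=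
  \big[Num.max/Fs k]_(j < (m k).+1) Fs (k - j)%N.

(* Main.v *)
Require Import Defs.
From HB Require Import structures.
From mathcomp Require Import all_boot all_order all_algebra.
From mathcomp Require Import all_classical all_reals all_analysis.
From mathcomp Require Import ring lra.
Import Order.TTheory GRing.Theory Num.Theory.
Import numFieldNormedType.Exports.
Local Open Scope ring_scope.
Local Open Scope classical_set_scope.
Section H.
Variables (R : realType) (n : nat).
Implicit Types u v w : 'rV[R]_n.

Lemma dotvC u v : dotv u v = dotv v u.
Proof. by rewrite /dotv; apply: eq_bigr => i _; rewrite mulrC. Qed.

Lemma dotvDl u v w : dotv (u + v) w = dotv u w + dotv v w.
Proof. by rewrite /dotv -big_split; apply: eq_bigr => i _; rewrite !mxE mulrDl. Qed.

Lemma dotvNl u w : dotv (- u) w = - dotv u w.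
Proof. by rewrite /dotv -sumrN; apply: eq_bigr => i _; rewrite !mxE mulNr. Qed.

Lemma dotvBl u v w : dotv (u - v) w = dotv u w - dotv v w.
Proof. by rewrite dotvDl dotvNl. Qed.

Lemma dotvZl (a : R) u w : dotv (a *: u) w = a * dotv u w.
Proof. by rewrite /dotv mulr_sumr; apply: eq_bigr => i _; rewrite !mxE mulrA. Qed.

Lemma dotvZr (a : R) u w : dotv w (a *: u) = a * dotv w u.
Proof. by rewrite dotvC dotvZl dotvC. Qed.

Lemma dotvDr u v w : dotv w (u + v) = dotv w u + dotv w v.
Proof. by rewrite dotvC dotvDl !(dotvC w). Qed.

Lemma dotvNr u w : dotv w (- u) = - dotv w u.
Proof. by rewrite dotvC dotvNl dotvC. Qed.

Lemma dotv_ge0 u : 0 <= dotv u u.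
Proof. by apply: sumr_ge0 => i _; rewrite -expr2 sqr_ge0. Qed.

Lemma enorm2 u : enorm u ^+ 2 = dotv u u.
Proof. by rewrite /enorm sqr_sqrtr // dotv_ge0. Qed.

Lemma dotv_gt0 u : u != 0 -> 0 < dotv u u.
Proof.
move=> u0; rewrite lt_def dotv_ge0 andbT; apply/negP => /eqP H.
move/eqP: u0; apply; apply/matrixP => i j; rewrite (ord1 i) mxE.
have /psumr_eq0P H2 : \sum_(i < n) u 0 i * u 0 i = 0 by [].
have := H2 (fun i _ => ltac:(by rewrite -expr2 sqr_ge0)) j isT.
by move/eqP; rewrite mulf_eq0 orbb => /eqP.
Qed.

Lemma amgm u v (s : R) : 2 * s * dotv u v <= s ^+ 2 * dotv u u + dotv v v.
Proof.
rewrite /dotv mulr_sumr mulr_sumr -big_split /=; apply: ler_sum => i _.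
have := sqr_ge0 (s * u 0 i - v 0 i). nra.
Qed.

Lemma dotv_quad (a b : R) u v : dotv (a *: u + b *: v) (a *: u + b *: v) =
  a ^+ 2 * dotv u u + 2 * a * b * dotv u v + b ^+ 2 * dotv v v.
Proof.
rewrite !dotvDl !dotvDr !dotvZl !dotvZr (dotvC v u); ring.
Qed.

Lemma dotvNN u : dotv (- u) (- u) = dotv u u.
Proof. by rewrite dotvNl dotvNr opprK. Qed.

Lemma limit_arg (A Q : R) : 0 <= Q ->
  (forall t, 0 < t <= 1 -> A + (1 - t / 2) * Q <= 0) -> A + Q <= 0.
Proof.
move=> Q0 H.
have [A0|A0] := ltP 0 A.
  have := H 1 ltac:(by rewrite ltr01 lexx). lra.
have [Qe|Qp] := eqVneq Q 0.
  rewrite Qe; lra.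
have Qg : 0 < Q by rewrite lt_def Qp Q0.
rewrite leNgt; apply/negP => AQ.
have hT : 0 < (A + Q) / Q <= 1.
  by rewrite divr_gt0 //= ?ler_pdivrMr // ?mul1r; lra.
have := H _ hT.
have -> : (1 - (A + Q) / Q / 2) * Q = Q - (A + Q) / 2.
  by field; rewrite Qp.
lra.
Qed.

Lemma prox_ineq (c : 'rV[R]_n -> R) x g d (tau mu : R) :
  convex_fun c -> 0 < tau -> 0 < mu ->
  is_prox c (x - tau *: g) (mu * tau) (x + d) ->
  tau * (dotv d g + mu * (c (x + d) - c x)) + dotv d d <= 0.
Proof.
move=> cc t0 m0 hp.
set A := tau * (dotv d g + mu * (c (x + d) - c x)).
apply: limit_arg; first exact: dotv_ge0.
move=> t /andP [t0' t1].
have := hp (x + (1 - t) *: d).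
have -> : x - tau *: g - (x + d) = - (tau *: g + 1 *: d).
  by apply/matrixP => i j; rewrite !mxE; ring.
have -> : x - tau *: g - (x + (1 - t) *: d) = - (tau *: g + (1 - t) *: d).
  by apply/matrixP => i j; rewrite !mxE; ring.
rewrite !enorm2 !dotvNN !dotv_quad.
have hc := cc (x + d) x (1 - t) ltac:(lra) ltac:(lra).
have e1 : (1 - t) *: (x + d) + (1 - (1 - t)) *: x = x + (1 - t) *: d.
  by apply/matrixP => i j; rewrite !mxE; ring.
rewrite e1 in hc.
rewrite /A (dotvC d g).
set G := dotv g g; set X := dotv g d; set Q := dotv d d.
move: hc; set cp := c (x + d); set cx := c x; set cy := c (x + (1 - t) *: d) => hc.
move=> H.
have H1 : mu * tau * cy <= mu * tau * ((1 - t) * cp + (1 - (1 - t)) * cx).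
  by rewrite ler_pM2l // mulr_gt0.
have H2 : t * (tau * (X + mu * (cp - cx)) + (1 - t / 2) * Q) <= 0.
  nra.
by rewrite pmulr_rle0 in H2.
Qed.
End H.
Lemma grad_ineq (R : realType) (n : nat) (f : 'rV[R]_n -> R) g :
  convex_fun f -> is_gradient f g -> forall y z, f y + dotv (g y) (z - y) <= f z.
Proof.
move=> cf gf y z; set v := z - y; have [dfy dfE] := gf y.
have hd : derivable f y v := @diff_derivable _ _ _ f y v dfy.
rewrite -dfE -deriveE //.
have H : (fun h => h^-1 *: ((f \o shift y) (h *: v) - f y)) @ 0^'+ --> 'D_v f y.
  move=> A /hd /nbhs_ballP [_ /posnumP[e] xe_A].
  by exists e%:num => //= t xe_t /gt_eqF/negbT/xe_A; exact.
suff : 'D_v f y <= f z - f y by lra.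
apply: (cvgr_to_le H); near=> h.
have h0 : 0 < h by near: h; exact: nbhs_right_gt.
have h1 : h < 1 by near: h; exact: nbhs_right_lt.
rewrite /= -[h^-1 *: _]/(h^-1 * _).
have -> : h *: v + y = h *: z + (1 - h) *: y by rewrite /v scalerBr scalerBl scale1r [RHS]addrA addrAC.
have := cf z y h (ltW h0) (ltW h1).
rewrite ler_pdivrMl // => Hc.
lra.
Unshelve. all: by end_near.
Qed.
Lemma final_real (R : realType) (a D q tau tm L th Fk Fk1 Rk : R) :
  0 < a -> a <= 1 -> 0 < q -> 0 < tau -> tau <= tm -> 0 < L -> 0 < th ->
  tau * D + q <= 0 -> Fk1 - Fk <= a * D + L * a ^+ 2 * q -> Fk <= Rk ->
  Fk1 - Rk >= - (a ^+ 2 / 2) * L * q + a * D ->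
  (Fk1 - Fk) / (a * D) * `|1 - (Fk1 - Rk) / (a * D)| >= th ->
  (Fk - Fk1) / q >= th / (2 * L * tm ^+ 2).
Proof.
move=> a0 a1 q0 t0 ttm L0 th0 hD hdes hR hH hth.
have Dn : D < 0 by nra.
set B := - (a * D).
have B0 : 0 < B by rewrite /B; nra.
set u := Fk - Fk1; set r := Rk - Fk1.
have e1 : (Fk1 - Fk) / (a * D) = u / B.
  by rewrite /u /B -mulrNN opprB invrN.
have e2 : 1 - (Fk1 - Rk) / (a * D) = (B - r) / B.
  rewrite /r /B; field; lra.
rewrite e1 e2 normrM normfV (gtr0_norm B0) in hth.
have hth2 : th * B ^+ 2 <= u * `|B - r|.
  have -> : u * `|B - r| = (u / B * (`|B - r| / B)) * B ^+ 2.
    by field; lra.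
  by rewrite ler_pM2r // exprn_gt0.
have hBr : `|B - r| <= L * a ^+ 2 * q.
  rewrite ler_norml; apply/andP; split; rewrite /B /r /u in hdes hH *; nra.
have u0 : 0 < u.
  rewrite ltNge; apply/negP => u0.
  have : u * `|B - r| <= 0 by exact: mulr_le0_ge0 u0 (normr_ge0 _).
  have : 0 < th * B ^+ 2 by rewrite mulr_gt0 // exprn_gt0.
  lra.
have h3 : th * B ^+ 2 <= u * (L * a ^+ 2 * q) by apply: (le_trans hth2); rewrite ler_pM2l.
have h4 : th * D ^+ 2 <= u * L * q.
  have eB : B ^+ 2 = a ^+ 2 * D ^+ 2 by rewrite /B sqrrN exprMn.
  rewrite eB in h3.
  have a2 : 0 < a ^+ 2 by rewrite exprn_gt0.
  have : a ^+ 2 * (th * D ^+ 2) <= a ^+ 2 * (u * L * q) by lra.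
  by rewrite ler_pM2l.
have h5 : q <= tm * (- D) by nra.
have h6 : q ^+ 2 <= tm ^+ 2 * D ^+ 2 by nra.
have h7 : th * q <= tm ^+ 2 * u * L.
  have : q * (th * q) <= q * (tm ^+ 2 * u * L) by nra.
  by rewrite ler_pM2l.
have tm0 : 0 < tm by lra.
have M0 : 0 < 2 * L * tm ^+ 2 by rewrite !mulr_gt0 ?exprn_gt0.
rewrite ler_pdivrMr //.
rewrite [u / q * _]mulrAC ler_pdivlMr //.
nra.
Qed.

Theorem mainTheorem4 (R : realType) (n : nat)
  (f c : 'rV[R]_n -> R) (gradf : 'rV[R]_n -> 'rV[R]_n) (mu L : R)
  (x : nat -> 'rV[R]_n) (tau alpha eta : nat -> R) (m : nat -> nat) (N : nat)
  (tau_min tau_max theta : R) (d : nat -> 'rV[R]_n) (k : nat) :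
  0 < mu ->
  convex_fun f -> is_gradient f gradf -> continuous gradf ->
  0 < L -> lipschitz_with gradf L ->
  convex_fun c ->
  (* reference value structure *)
  (0 < N)%N -> m 0%N = 0%N ->
  (forall j, m j.+1 <= minn (m j).+1 (N.-1))%N ->
  (forall j, 0 <= eta j <= 1) ->
  (* step sizes tau *)
  0 < tau_min -> (forall j, tau_min <= tau j <= tau_max) ->
  (* direction d_k *)
  is_prox c (x k - tau k *: gradf (x k)) (mu * tau k) (x k + d k) ->
  d k != 0 ->
  (* step alpha_k *)
  0 < alpha k <= 1 ->
  x k.+1 = x k + alpha k *: d k ->
  0 < theta ->
  let F := fun z => f z + mu * c z in
  let Fs := fun j => F (x j) in
  let R_k := eta k * Fmaxref Fs m k + (1 - eta k) * Fs k in
  let Delta := dotv (d k) (gradf (x k)) + mu * (c (x k + d k) - c (x k)) in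
  let nu := (Fs k.+1 - Fs k) / (alpha k * Delta) in
  let lam := (Fs k.+1 - R_k) / (alpha k * Delta) in
  nu * `|1 - lam| >= theta ->
  Fs k.+1 - R_k >= - (alpha k ^+ 2 / 2) * L * enorm (d k) ^+ 2 + alpha k * Delta ->
  (Fs k - Fs k.+1) / enorm (d k) ^+ 2 >= theta / (2 * L * tau_max ^+ 2)
  /\ theta / (2 * L * tau_max ^+ 2) > 0.
Proof.
move=> mu0 cf gf gc L0 Lip cc N0 m0 mS eta01 tmin0 taub hp dk0 /andP[a0 a1] xS th0
  F Fs R_k Delta nu lam hth hH.
have /andP [tk1 tk2] := taub k.
have tk0 : 0 < tau k by exact: lt_le_trans tk1.
have q0 : 0 < dotv (d k) (d k) := @dotv_gt0 _ _ (d k) dk0.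
have hD : tau k * Delta + dotv (d k) (d k) <= 0 := @prox_ineq _ _ c _ _ _ _ _ cc tk0 mu0 hp.
have hdes : Fs k.+1 - Fs k <= alpha k * Delta + L * alpha k ^+ 2 * dotv (d k) (d k).
  rewrite /Fs /F /Delta xS.
  move: (alpha k) a0 a1 (x k) (d k) q0 => a a0 a1 x0 dd q0.
  set q := dotv dd dd in q0 *.
  have hg := @grad_ineq _ _ f gradf cf gf (x0 + a *: dd) x0.
  have e3 : x0 - (x0 + a *: dd) = - (a *: dd).
    by apply/matrixP => i j; rewrite !mxE; ring.
  rewrite e3 dotvNr dotvZr in hg.
  set w := gradf (x0 + a *: dd) - gradf x0.
  have ew : dotv (gradf (x0 + a *: dd)) dd = dotv (gradf x0) dd + dotv w dd.
    by rewrite /w dotvBl; ring.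
  have hw : dotv w w <= L ^+ 2 * a ^+ 2 * q.
    rewrite -enorm2.
    have := Lip (x0 + a *: dd) x0.
    have e4 : x0 + a *: dd - x0 = a *: dd.
      by apply/matrixP => i j; rewrite !mxE; ring.
    rewrite e4 -/w => hl.
    have en : enorm (a *: dd) ^+ 2 = a ^+ 2 * q by rewrite enorm2 dotvZl dotvZr /q; ring.
    have e0 : 0 <= enorm w := sqrtr_ge0 _.
    have e0' : 0 <= enorm (a *: dd) := sqrtr_ge0 _.
    have : enorm w ^+ 2 <= (L * enorm (a *: dd)) ^+ 2.
      by nra.
    by rewrite exprMn en mulrA.
  set s := (L * a)^-1.
  have s0 : 0 < s by rewrite invr_gt0 mulr_gt0.
  have sLa : s * (L * a) = 1 by rewrite mulVf // gt_eqF // mulr_gt0.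
  have ha := @amgm _ _ w dd s; rewrite -/q in ha.
  have h1 : s ^+ 2 * dotv w w <= q.
    have -> : q = s ^+ 2 * (L ^+ 2 * a ^+ 2 * q).
      by transitivity ((s * (L * a)) ^+ 2 * q); [rewrite sLa expr1n mul1r | ring].
    by rewrite ler_pM2l // exprn_gt0.
  have h2 : s * dotv w dd <= q by lra.
  have h3 : dotv w dd <= L * a * q.
    have -> : dotv w dd = (L * a) * (s * dotv w dd) by rewrite mulrA (mulrC (L * a)) sLa mul1r.
    by rewrite ler_pM2l // mulr_gt0.
  have hcv := cc (x0 + dd) x0 a (ltW a0) a1.
  have e5 : a *: (x0 + dd) + (1 - a) *: x0 = x0 + a *: dd.
    by apply/matrixP => i j; rewrite !mxE; ring.
  rewrite e5 in hcv.
  have hcv' : mu * c (x0 + a *: dd) <= mu * (a * c (x0 + dd) + (1 - a) * c x0).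
    by rewrite ler_pM2l.
  have h4 : a * dotv w dd <= a * (L * a * q) by rewrite ler_pM2l.
  rewrite ew (@dotvC _ _ dd) in hg *.
  lra.
have hmax : Fs k <= Fmaxref Fs m k.
  rewrite /Fmaxref; elim/big_rec: _ => // i y _ Hy.
  by rewrite le_max Hy orbT.
have hR : Fs k <= R_k.
  have /andP [e0 e1] := eta01 k.
  rewrite /R_k; nra.
rewrite /nu /lam in hth.
rewrite enorm2 in hH *.
have tm0 : 0 < tau_max by exact: lt_le_trans tk2.
split.
  exact: (@final_real _ _ _ _ _ _ _ _ _ _ _ a0 a1 q0 tk0 tk2 L0 th0 hD hdes hR hH hth).
by rewrite divr_gt0 // !mulr_gt0 // exprn_gt0.
Qed.
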